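(* Let $0<\varepsilon\le1/2$, $q\in(0,1]$ and let $(G_n)$ be an expander sequence. Let each $\tilde G_n$ be obtained by deleting edges of $G_n$ such that each vertex keeps at least a $(1/2+\varepsilon)$ fraction of its edges, and let $I_t=I_t^{(pull)}$ for pull on $\tilde G_n$. Let further $q\in(0,1)$ and $|I_t|\le n/2$. Then for $\tau=-\log n/\log(1-q)$ and all $c<1$, whp $|I_{t+c\tau}|<n$.
   Context: pull protocol: in each synchronous round every uninformed vertex chooses a neighbour independently and uniformly at random, and if that neighbour is informed and the transmission succeeds (independently with probability $q$), the asking vertex becomes informed. $I_t$ is the set of vertices informed at the beginning of round $t$; probabilities are conditional on $I_t$. An expander sequence is a sequence $(G_n)$ of connected graphs, $G_n$ on $n$ vertices with minimum degree $\delta_n$, maximum degree $\Delta_n$, and $\lambda_n=\max\{|\mu_2|,|\mu_n|\}$ (adjacency eigenvalues), with $\Delta_n/\delta_n=1+o(1)$ and $\lambda_n=o(\Delta_n)$. ''Keeps at least a $(1/2+\varepsilon)$ fraction'' means $d_{\tilde G_n}(v)\ge(1/2+\varepsilon)d_{G_n}(v)$. whp means with probability $1-o(1)$ as $n\to\infty$; natural log. *)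

(* Defs.v *)
From HB Require Import structures.
From mathcomp Require Import all_boot all_order all_algebra.
From mathcomp Require Import all_classical all_reals all_analysis.
Set Implicit Arguments. Unset Strict Implicit. Unset Printing Implicit Defensive.
Import Order.TTheory GRing.Theory Num.Theory.
Local Open Scope ring_scope.

Section Pull.
Variable R : realType.
Variable V : finType.

Definition deg (e : rel V) (v : V) : nat := #|[set u | e v u]|.

Definition max_deg (e : rel V) : nat := \max_(v : V) deg e v.
Definition min_deg (e : rel V) : nat := \big[minn/#|V|]_(v : V) deg e v.

(* Law of the local randomness of vertex v in one round: a neighbour u
   chosen uniformly at random and a transmission coin b that succeeds
   (b = true) with probability q, independently.  (A vertex of degree 0
   makes a dummy choice that never informs it.) *)
Definition pull_weight (e : rel V) (q : R) (v : V) (o : V * bool) : R :=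
  if deg e v == 0%N then ((o.1 == v) && ~~ o.2)%:R
  else (e v o.1)%:R / (deg e v)%:R * (if o.2 then q else 1 - q).

Definition pull_step (e : rel V) (I : {set V}) (f : {ffun V -> V * bool})
  : {set V} :=
  I :|: [set v | [&& v \notin I, e v (f v).1, (f v).1 \in I & (f v).2]].

Definition pull_trans (e : rel V) (q : R) (I J : {set V}) : R :=
  \sum_(f : {ffun V -> V * bool} | pull_step e I f == J)
     \prod_(v : V) pull_weight e q v (f v).

(* pull_dist e q k I J = P(I_{t+k} = J | I_t = I) *)
Fixpoint pull_dist (e : rel V) (q : R) (k : nat) (I J : {set V}) : R :=
  match k with
  | 0%N => (J == I)%:R
  | k'.+1 => \sum_(K : {set V}) pull_dist e q k' I K * pull_trans e q K J
  end.

End Pull.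

Definition adj_mx (R : realType) (n : nat) (e : rel 'I_n) : 'M[R]_n :=
  \matrix_(i, j) (e i j)%:R.

(* l = max(|mu_2|, |mu_n|) where mu_1 >= ... >= mu_n are the adjacency
   eigenvalues (with multiplicity), i.e. the roots of the char. polynomial *)
Definition is_lambda (R : realType) (n : nat) (e : rel 'I_n) (l : R) : Prop :=
  exists s : seq R,
    [/\ sorted (fun x y : R => y <= x) s, size s = n,
        char_poly (adj_mx R e) = \prod_(x <- s) ('X - x%:P)
      & l = Num.max `|s`_1| `|s`_(n.-1)|].

Definition pull_tau (R : realType) (q : R) (n : nat) : R :=
  - ln (n%:R : R) / ln (1 - q).

(* Main.v *)
Require Import Defs.
From HB Require Import structures.
From mathcomp Require Import all_boot all_order all_algebra.
From mathcomp Require Import all_classical all_reals all_analysis.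
From mathcomp Require Import ring lra.
Import Order.TTheory GRing.Theory Num.Theory numFieldNormedType.Exports.
Local Open Scope ring_scope.

Section H.
Variable R : realType.
Variable V : finType.
Variable e : rel V.
Variable q : R.
Hypothesis q0 : 0 <= q.
Hypothesis q1 : q <= 1.

Lemma sum_e_deg v : \sum_(u : V) (e v u)%:R = (deg e v)%:R :> R.
Proof.
rewrite (eq_bigr (fun u => if e v u then 1 else 0)); last by move=> u _; case: (e v u).
rewrite -big_mkcond sumr_const /deg.
by congr (_ *+ _); apply: eq_card => u; rewrite inE.
Qed.

Lemma weight_ge0 v o : 0 <= pull_weight e q v o.
Proof.
rewrite /pull_weight; case: ifP => _; first by [].
apply: mulr_ge0; first by apply: divr_ge0.
by case: o.2 => //; rewrite subr_ge0.
Qed.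

Lemma wsum_ab v (a b : R) :
  \sum_o pull_weight e q v o * (if o.2 then a else b) =
  if deg e v == 0%N then b else q * a + (1 - q) * b.
Proof.
rewrite -(pair_big xpredT xpredT (fun u (c : bool) =>
   pull_weight e q v (u, c) * (if c then a else b))) /=.
under eq_bigr => u _ do rewrite big_bool /=.
rewrite /pull_weight; case: ifP => d0.
  under eq_bigr => u _ do rewrite andbF andbT mul0r add0r.
  rewrite (bigD1 v) //= eqxx mul1r big1 ?addr0 // => u /negbTE ->; by rewrite mul0r.
under eq_bigr => u _ do rewrite -!mulrA -mulrDr.
rewrite -mulr_suml /= sum_e_deg -mulrDr mulrA mulfV ?mul1r //.
by rewrite pnatr_eq0 d0.
Qed.

Lemma wsum1 v : \sum_o pull_weight e q v o = 1.
Proof.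
transitivity (\sum_o pull_weight e q v o * (if o.2 then 1 else 1)).
  by apply: eq_bigr => o _; case: o.2; rewrite mulr1.
by rewrite wsum_ab; case: ifP => _ //; rewrite !mulr1 addrC subrK.
Qed.

Lemma wsumq v : \sum_o pull_weight e q v o * (if o.2 then 1 else 0) <= q.
Proof.
by rewrite wsum_ab; case: ifP => _ //; rewrite mulr1 mulr0 addr0.
Qed.

Lemma trans_ge0 K J : 0 <= pull_trans e q K J.
Proof.
by apply: sumr_ge0 => f _; apply: prodr_ge0 => v _; apply: weight_ge0.
Qed.

Lemma trans_phi K (phi : {set V} -> R) :
  \sum_J pull_trans e q K J * phi J =
  \sum_(f : {ffun V -> V * bool}) (\prod_v pull_weight e q v (f v)) * phi (pull_step e K f).
Proof.
rewrite (partition_big (fun f => pull_step e K f) xpredT) //=.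
apply: eq_bigr => J _; rewrite /pull_trans mulr_suml.
by apply: eq_bigr => f /eqP ->.
Qed.

Lemma trans_total K : \sum_J pull_trans e q K J = 1.
Proof.
transitivity (\sum_J pull_trans e q K J * 1).
  by apply: eq_bigr => J _; rewrite mulr1.
rewrite trans_phi.
under eq_bigr => f _ do rewrite mulr1.
rewrite -(bigA_distr_bigA (fun v o => pull_weight e q v o)) /=.
by apply: big1 => v _; apply: wsum1.
Qed.

Lemma dist_ge0 k I J : 0 <= pull_dist e q k I J.
Proof.
elim: k J => [|k IH] J /=; first by case: (J == I).
by apply: sumr_ge0 => K _; apply: mulr_ge0 => //; apply: trans_ge0.
Qed.

Lemma dist_total k I : \sum_J pull_dist e q k I J = 1.
Proof.
elim: k => [|k IH] /=.
  by rewrite (bigD1 I) //= eqxx big1 ?addr0 // => J /negbTE ->.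
rewrite exchange_big /= -[RHS]IH; apply: eq_bigr => K _.
by rewrite -mulr_sumr trans_total mulr1.
Qed.

Definition p := 1 - q.
Definition M (U : {set V}) (j : nat) (J : {set V}) : R :=
  \prod_(v in U) (if v \in J then 1 else 1 - p ^+ j).

Lemma p_ge0 : 0 <= p. Proof. by rewrite /p subr_ge0. Qed.
Lemma p_le1 : p <= 1. Proof. by rewrite /p lerBlDr lerDl. Qed.
Lemma pX_ge0 j : 0 <= p ^+ j. Proof. exact: exprn_ge0 p_ge0. Qed.
Lemma pX_le1 j : p ^+ j <= 1. Proof. by rewrite exprn_ile1 ?p_ge0 ?p_le1. Qed.
Lemma omp_ge0 j : 0 <= 1 - p ^+ j. Proof. by rewrite subr_ge0 pX_le1. Qed.

Lemma M_ge0 U j J : 0 <= M U j J.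
Proof. by apply: prodr_ge0 => v _; case: ifP => _ //; apply: omp_ge0. Qed.

Lemma step_M U K j : \sum_J pull_trans e q K J * M U j J <= M U j.+1 K.
Proof.
rewrite trans_phi.
pose g v (o : V * bool) : R := if v \in U then
  (if (v \in K) || [&& e v o.1, o.1 \in K & o.2] then 1 else 1 - p ^+ j) else 1.
have E f : M U j (pull_step e K f) = \prod_v g v (f v).
  rewrite /M big_mkcond; apply: eq_bigr => v _; rewrite /g.
  case: (v \in U) => //; rewrite /pull_step !inE.
  by case: (v \in K).
under eq_bigr => f _ do rewrite E -big_split /=.
rewrite -(bigA_distr_bigA (fun v o => pull_weight e q v o * g v o)) /=.
rewrite /M [X in _ <= X]big_mkcond /=; apply: ler_prod => v _; apply/andP; split.
  apply: sumr_ge0 => o _; apply: mulr_ge0; first exact: weight_ge0.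
  by rewrite /g; case: ifP => _ //; case: ifP => _ //; apply: omp_ge0.
rewrite /g; case: (boolP (v \in U)) => vU; last first.
  by under eq_bigr => o _ do rewrite mulr1; rewrite wsum1.
case: (boolP (v \in K)) => vK /=.
  by under eq_bigr => o _ do rewrite mulr1; rewrite wsum1.
apply: (@le_trans _ _ (\sum_o pull_weight e q v o *
   ((1 - p ^+ j) + p ^+ j * (if o.2 then 1 else 0)))).
  apply: ler_sum => o _; apply: ler_wpM2l; first exact: weight_ge0.
  case: ifP => [/and3P [_ _ ->]|_]; first by rewrite mulr1 subrK.
  by rewrite lerDl; apply: mulr_ge0; [apply: pX_ge0 | case: o.2].
under eq_bigr => o _ do rewrite mulrDr.
rewrite big_split /= -mulr_suml wsum1 mul1r.
under eq_bigr => o _ do rewrite mulrCA.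
rewrite -mulr_sumr.
apply: (@le_trans _ _ (1 - p ^+ j + p ^+ j * q)).
  by rewrite lerD2l; apply: ler_wpM2l; [apply: pX_ge0 | apply: wsumq].
by rewrite exprSr /p le_eqVlt; apply/orP; left; apply/eqP; ring.
Qed.

Lemma dist_M U k : forall j I,
  \sum_J pull_dist e q k I J * M U j J <= M U (j + k) I.
Proof.
elim: k => [|k IH] j I /=.
  rewrite addn0 (bigD1 I) //= eqxx mul1r big1 ?addr0 // => J /negbTE ->.
  by rewrite mul0r.
under eq_bigr => J _ do rewrite mulr_suml.
rewrite exchange_big /=.
apply: (@le_trans _ _ (\sum_K pull_dist e q k I K * M U j.+1 K)); last first.
  by rewrite addnS -addSn; apply: IH.
apply: ler_sum => K _.
under eq_bigr => J _ do rewrite -mulrA.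
rewrite -mulr_sumr; apply: ler_wpM2l; first exact: dist_ge0.
exact: step_M.
Qed.


Lemma bound_main k I :
  `|1 - \sum_(J : {set V} | (#|J| < #|V|)%N) pull_dist e q k I J|
    <= (1 - p ^+ k) ^+ #|~: I|.
Proof.
have T := dist_total k I.
rewrite (bigID (fun J : {set V} => (#|J| < #|V|)%N)) /= in T.
set S := \sum_(J | _) _ in T *; set S' := \sum_(J | _) _ in T.
have -> : 1 - S = S' by rewrite -T addrAC subrr add0r.
have S'0 : 0 <= S' by apply: sumr_ge0 => J _; apply: dist_ge0.
rewrite ger0_norm //.
have HM := dist_M (~: I) k 0 I.
rewrite add0n in HM.
have E : M (~: I) k I = (1 - p ^+ k) ^+ #|~: I|.
  rewrite /M -prodr_const; apply: eq_bigr => v; rewrite inE => /negbTE -> //.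
rewrite E in HM; apply: le_trans HM.
rewrite (bigID (fun J : {set V} => (#|J| < #|V|)%N)) /=; apply: ler_wpDl.
  apply: sumr_ge0 => J _; apply: mulr_ge0; [apply: dist_ge0 | apply: M_ge0].
rewrite /S'; apply: ler_sum => J HJ.
have -> : J = (finset.setT : {set V}).
  apply/eqP; rewrite eqEcard finset.subsetT finset.cardsT; by rewrite leqNgt.
rewrite /M big1 ?mulr1 // => v _; by rewrite inE.
Qed.

Lemma bern (x : R) (m : nat) : 0 <= x <= 1 -> (1 - x) ^+ m * (1 + m%:R * x) <= 1.
Proof.
move=> /andP [x0 x1]; elim: m => [|m IH]; first by rewrite expr0 mul0r addr0 mul1r.
apply: le_trans IH; rewrite exprS.
have y0 : 0 <= (1 - x) ^+ m by rewrite exprn_ge0 // subr_ge0.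
have m0 : 0 <= m%:R :> R by [].
set y := (1 - x) ^+ m in y0 *.
rewrite -natr1.
have h : 0 <= y * (m%:R + 1) * x * x by rewrite !mulr_ge0 // addr_ge0.
nra.
Qed.
End H.

Lemma fin_ineq (R : realType) (ee y z : R) : 0 < ee -> y * (1 + z) <= 1 -> 0 <= y -> 1 <= ee * z -> y <= ee.
Proof.
move=> e0 Hb y0 A.
  have h1 : 0 <= y * (ee * z - 1) by apply: mulr_ge0; lra.
  have h2 : 0 <= ee * (1 - y * (1 + z)) by apply: mulr_ge0; lra.
  have h3 : 0 <= ee * y by apply: mulr_ge0; lra.
  nra.
Qed.

Local Open Scope classical_set_scope.
Local Open Scope ring_scope.

Theorem lemma3p3 (R : realType) (eps q c : R)
  (G Gt : forall n : nat, rel 'I_n) (I0 : forall n : nat, {set 'I_n}) :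
  0 < eps -> eps <= 1 / 2 -> 0 < q -> q < 1 -> c < 1 ->
  (* (G_n) is an expander sequence *)
  (forall n, [/\ symmetric (G n), irreflexive (G n)
               & forall u v, connect (G n) u v]) ->
  ((fun n => ((max_deg (G n))%:R / (min_deg (G n))%:R : R)) @ \oo --> (1 : R)) ->
  (exists lam : nat -> R,
      (forall n, (2 <= n)%N -> is_lambda (G n) (lam n)) /\
      ((fun n => lam n / (max_deg (G n))%:R) @ \oo --> (0 : R))) ->
  (* tilde G_n obtained by deleting edges, keeping a (1/2+eps) fraction *)
  (forall n, [/\ symmetric (Gt n), subrel (Gt n) (G n)
               & forall v, (1 / 2 + eps) * (deg (G n) v)%:R <= (deg (Gt n) v)%:R]) ->
  (* |I_t| <= n/2 *)
  (forall n, (#|I0 n|%:R : R) <= n%:R / 2) ->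
  (fun n => \sum_(J : {set 'I_n} | (#|J| < n)%N)
      pull_dist (Gt n) q (Num.truncn (c * pull_tau q n)) (I0 n) J)
    @ \oo --> (1 : R).
Proof.
move=> _ _ q0 q1 c1 _ _ _ _ HI0.
set c' := Num.max c 0.
have c'0 : 0 <= c' by rewrite le_max lexx orbT.
have c'1 : c' < 1 by rewrite gt_max c1 ltr01.
have cc' : c <= c' by rewrite le_max lexx.
apply/cvgrPdist_le => ee ee0.
pose L := 2 / ((1 - c') * ee).
have hL : ee * (1 - c') * L = 2.
  have h1 : 1 - c' != 0 by rewrite gt_eqF // subr_gt0.
  have h2 : ee != 0 by rewrite gt_eqF.
  rewrite /L; field; by rewrite h1 h2.
exists (Num.truncn (expR L)).+1 => // n /= Hn.
set k := Num.truncn _.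
have := @bound_main R _ (Gt n) q (ltW q0) (ltW q1) k (I0 n); rewrite card_ord => B.
apply: le_trans B _.
set x := p R q ^+ k.
set m := #|~: I0 n|.
have x0 : 0 <= x by apply: pX_ge0; apply: ltW.
have x1 : x <= 1 by apply: pX_le1; apply: ltW.
have Hb : (1 - x) ^+ m * (1 + m%:R * x) <= 1 by apply: bern; rewrite x0 x1.
suff A : 1 <= ee * (m%:R * x).
  apply: (@fin_ineq R ee _ _ ee0 Hb) => //; by rewrite exprn_ge0 // subr_ge0.
have n0 : (0 < n)%N by move: Hn; case: (n).
set nr := n%:R : R.
have nr0 : 0 < nr by rewrite ltr0n.
have HlnL : L <= ln nr.
  have H1 : expR L < nr.
    have := truncn_itv (ltW (expR_gt0 L)) => /andP [_ H2].
    apply: lt_le_trans H2 _; by rewrite /nr ler_nat.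
  have := ltW H1; rewrite -ler_ln ?posrE ?expR_gt0 // expRK //.
have lp : ln (1 - q) < 0 by apply: ln_lt0; apply/andP; split; lra.
set t := pull_tau q n.
have ht : t * ln (1 - q) = - ln nr by rewrite /t /pull_tau divfK ?lt_eqF.
have lnn0 : 0 <= ln nr by apply: ln_ge0; rewrite /nr ler1n.
have t0 : 0 <= t by nra.
have hk : k%:R <= c' * t.
  case: (lerP 0 (c * t)) => h.
    have h' := h; rewrite -truncn_le in h'.
    apply: le_trans h' _; by apply: ler_wpM2r.
  have : (k <= 0)%N by rewrite /k truncn_le_nat; apply: (lt_trans h); exact: ltr01.
  rewrite leqn0 => /eqP ->; by rewrite mulr_ge0.
have p0 : 0 < p R q by rewrite /p; lra.
have xpos : 0 < x by rewrite exprn_gt0.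
have lnx : ln x = ln (1 - q) * k%:R by rewrite /x lnXn // mulr_natr.
have lnx2 : - c' * ln nr <= ln x by rewrite lnx; nra.
have ex : expR (- c' * ln nr) <= x by rewrite -[x in _ <= x]lnK ?posrE // ler_expR.
have nx : 1 + (1 - c') * ln nr <= nr * x.
  apply: le_trans (expR_ge1Dx _) _.
  have -> : expR ((1 - c') * ln nr) = nr * expR (- c' * ln nr).
    by rewrite mulrBl mul1r expRD lnK ?posrE // mulNr.
  by apply: ler_wpM2l; [apply: ltW|].
have hm : nr / 2 <= m%:R.
  have := cardsC (I0 n); rewrite card_ord => /(congr1 (fun a : nat => a%:R : R)).
  rewrite natrD => E; have := HI0 n; rewrite -/nr; lra.
have s1 : nr / 2 * x <= m%:R * x by apply: ler_wpM2r.
have s2 : (1 - c') * L <= (1 - c') * ln nr by apply: ler_wpM2l; lra.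
nra.
Qed.
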